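(* Let $\Gamma$ be a lattice with periodic boundary conditions as below. A set of faces $F_c\subseteq C_2(\Gamma)$ is a cut set of $\Gamma$ if and only if some nontrivial (i.e. not equal to the identity) $X$-type stabilizer of the 3D toric code on $\Gamma$ has its support contained in $F_c$.
   Context: $\Gamma$ is a finite, connected three-dimensional cell complex without boundary (periodic boundary conditions, e.g. a cellulation of the 3-torus), with edges $C_1(\Gamma)$, faces $C_2(\Gamma)$, volumes $C_3(\Gamma)$; every face lies in the boundary of exactly two distinct volumes, and the dual complex is connected. $\partial(\nu)$ denotes the set of boundary faces of a volume $\nu$, and $\iota(e)$ the set of faces containing edge $e$ in their boundary. The 3D toric code on $\Gamma$ has one qubit per face and stabilizer group generated by $B_e=\prod_{f\in\iota(e)}Z_f$ and $A_\nu=\prod_{f\in\partial(\nu)}X_f$; the $X$-type stabilizers are the products of the $A_\nu$. A face path is a sequence of faces $\rho=(f_1,\dots,f_m)$ together with pairwise distinct volumes $\Lambda(\rho)=(\nu_1,\dots,\nu_{m-1})$ with $f_i,f_{i+1}\in\partial(\nu_i)$. A set of faces $K$ is a cut set of $\Gamma$ if there exist volumes $\nu,\nu'$ such that every face path $\rho$ with $f_1\in\partial(\nu)$, $f_m\in\partial(\nu')$ and $\nu,\nu'\notin\Lambda(\rho)$ satisfies $K\cap\rho\ne\emptyset$. *)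

(* Defs.v *)
From mathcomp Require Import all_boot.
Set Implicit Arguments. Unset Strict Implicit. Unset Printing Implicit Defensive.

(* A 3D cell complex is given by its finite types of faces F and volumes V
   together with the face-boundary map  bnd : V -> {set F}  (bnd v = ∂(v)).
   Edges only enter the Z-type stabilizers B_e, which play no role here. *)

Definition vols_of (F V : finType) (bnd : V -> {set F}) (f : F) : {set V} :=
  [set v | f \in bnd v].

Definition dual_adj (F V : finType) (bnd : V -> {set F}) : rel V :=
  fun v w => [exists f, (f \in bnd v) && (f \in bnd w)].

Definition dual_connected (F V : finType) (bnd : V -> {set F}) : Prop :=
  forall v w : V, connect (dual_adj bnd) v w.

(* X-type Pauli operators on the face qubits, up to phase: prod_f X_f^(x f),
   encoded by the exponent vector x : F -> F_2 (bool, addition = xor).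
   Multiplication of operators is pointwise xor; identity is the zero vector. *)
Definition Xop (F : finType) := {ffun F -> bool}.
Definition Xid (F : finType) : Xop F := [ffun => false].
Definition Xsupport (F : finType) (x : Xop F) : {set F} := [set f | x f].

Definition A_vol (F V : finType) (bnd : V -> {set F}) (v : V) : Xop F :=
  [ffun f => f \in bnd v].

Definition Xstab_of (F V : finType) (bnd : V -> {set F}) (S : {set V}) : Xop F :=
  [ffun f => \big[addb/false]_(v in S) A_vol bnd v f].

Definition is_X_stabilizer (F V : finType) (bnd : V -> {set F}) (x : Xop F) : Prop :=
  exists S : {set V}, x = Xstab_of bnd S.

(* A face path rho = (f_1,...,f_m), Lambda(rho) = (v_1,...,v_{m-1})
   is encoded by its first face f0 = f_1 and the list s = [(v_1,f_2);...;(v_{m-1},f_m)].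
   fpath checks f_i, f_{i+1} in ∂(v_i). *)
Fixpoint fpath (F V : finType) (bnd : V -> {set F}) (f0 : F) (s : seq (V * F)) : bool :=
  match s with
  | [::] => true
  | (v, f) :: s' => [&& f0 \in bnd v, f \in bnd v & fpath bnd f s']
  end.

Definition face_path (F V : finType) (bnd : V -> {set F}) (f0 : F) (s : seq (V * F)) : bool :=
  fpath bnd f0 s && uniq (map fst s).

Definition path_faces (F V : finType) (f0 : F) (s : seq (V * F)) : seq F :=
  f0 :: map snd s.

Definition cut_set (F V : finType) (bnd : V -> {set F}) (K : {set F}) : Prop :=
  exists nu nu' : V,
    forall (f0 : F) (s : seq (V * F)),
      face_path bnd f0 s ->
      f0 \in bnd nu ->
      last f0 (map snd s) \in bnd nu' ->
      nu \notin map fst s -> nu' \notin map fst s ->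
      has (fun f => f \in K) (path_faces f0 s).

(* Main.v *)
Require Import Defs.
From mathcomp Require Import all_boot.

Section L.
Variables (F V : finType) (bnd : V -> {set F}).
Hypothesis two_vols : forall f : F, #|vols_of bnd f| = 2.

Lemma vols2 f a b : a != b -> f \in bnd a -> f \in bnd b ->
  vols_of bnd f = [set a; b].
Proof.
move=> ab fa fb; apply/esym/eqP; rewrite eqEcard two_vols cards2 ab andbT.
by apply/subsetP=> v; rewrite !inE => /orP[]/eqP->; rewrite ?fa ?fb.
Qed.

Lemma xstab_pair S f a b : a != b -> f \in bnd a -> f \in bnd b ->
  Xstab_of bnd S f = (a \in S) (+) (b \in S).
Proof.
move=> ab fa fb; rewrite ffunE.
have E : forall v, (A_vol bnd v f) = (v \in [set a; b]).
  by move=> v; rewrite ffunE -(vols2 _ _ _ ab fa fb) inE.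
under eq_bigr => v _ do rewrite E.
rewrite big_mkcond /= (bigD1 a) //= (bigD1 b) //=; last by rewrite eq_sym.
rewrite big1; last first.
  by move=> v /andP[va vb]; rewrite !inE (negbTE va) (negbTE vb); case: ifP.
rewrite !inE !eqxx ?orbT /=.
by case: (a \in S); case: (b \in S).
Qed.

Lemma cross (S : {set V}) f u w : u \in S -> w \notin S -> f \in bnd u -> f \in bnd w ->
  Xstab_of bnd S f.
Proof.
move=> uS wS fu fw; have uw : u != w by apply: contraNneq wS => <-.
by rewrite (xstab_pair S _ _ _ uw fu fw) uS (negbTE wS).
Qed.

Lemma cross_path (S : {set V}) (K : {set F}) : Xsupport (Xstab_of bnd S) \subset K ->
  forall s f0 u w, u \in S -> w \notin S -> f0 \in bnd u -> Defs.fpath bnd f0 s ->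
  last f0 (map snd s) \in bnd w -> has (fun f => f \in K) (f0 :: map snd s).
Proof.
move=> sub; elim=> [|[v f] s IH] f0 u w uS wS f0u /=.
  move=> _ f0w; rewrite orbF; apply: (subsetP sub); rewrite inE.
  exact: cross _ _ _ _ uS wS f0u f0w.
case/and3P=> f0v fv fp lw; case vS: (v \in S).
  by apply/orP; right; exact: IH _ _ _ vS wS fv fp lw.
apply/orP; left; apply: (subsetP sub); rewrite inE.
by apply: cross _ _ _ _ uS _ f0u f0v; rewrite vS.
Qed.

Lemma iter_addb n : iter n (addb true) false = odd n.
Proof. by elim: n => //= n ->. Qed.

Variable K : {set F}.
Definition e : rel V := fun a b =>
  [exists g, [&& g \in bnd a, g \in bnd b & g \notin K]].

Lemma build x p : path e x p -> p != [::] ->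
  exists f0 s, [/\ Defs.fpath bnd f0 s, f0 \in bnd x, last f0 (map snd s) \in bnd (last x p),
    all (fun f => f \notin K) (f0 :: map snd s) & rcons (map fst s) (last x p) = p].
Proof.
elim: p x => [//|y p IH] x /= /andP[/existsP[g /and3P[gx gy gK]] pp] _.
case: p IH pp => [|z p] IH pp.
  by exists g, [::]; rewrite /= gx gy gK.
have [f0 [s [fp f0y lst al rc]]] := IH y pp isT.
exists g, ((y, f0) :: s); split => //=.
- by rewrite gy f0y fp.
- by rewrite gK.
- by rewrite rc.
Qed.
End L.
Arguments xstab_pair {F V bnd} two_vols S {f a b}.
Arguments cross_path {F V bnd} two_vols {S K} sub {s f0 u w}.
Arguments e {F V} bnd K.
Arguments build {F V bnd K x p}.

Theorem lemma8 (F V : finType) (bnd : V -> {set F})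
  (two_vols : forall f : F, #|vols_of bnd f| = 2)
  (cells_nonempty : forall v : V, bnd v != set0)
  (dual_conn : dual_connected bnd)
  (Fc : {set F}) :
  cut_set bnd Fc <->
  exists x : Xop F, [/\ is_X_stabilizer bnd x, x != Xid F & Xsupport x \subset Fc].
Proof.
split.
- case=> nu [nu' H].
  case: (eqVneq nu nu') => [eqn|nn].
    subst nu'.
    exists (Xstab_of bnd [set nu]); split.
    + by exists [set nu].
    + have /set0Pn[f fn] := cells_nonempty nu.
      apply/eqP => /ffunP /(_ f); rewrite !ffunE big_set1 ffunE fn.
      by [].
    + apply/subsetP => f; rewrite inE ffunE big_set1 ffunE => fn.
      have := H f [::] isT fn fn isT isT; by rewrite /= orbF.
  set S := [set w | connect (e bnd Fc) nu w].
  have nuS : nu \in S by rewrite inE connect0.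
  have nu'S : nu' \notin S.
    rewrite inE; apply/negP => /connectP[p pp lp].
    move: lp; case: (shortenP pp) => p' pp' up' _ lp.
    have pn : p' != [::] by case: p' pp' up' lp => //= _ _ E; rewrite E eqxx in nn.
    have [f0 [s [fp f0x lst al rc]]] := build pp' pn.
    rewrite -lp in lst rc.
    have := H f0 s; rewrite /face_path fp f0x lst.
    move: up'; rewrite -rc cons_uniq rcons_uniq mem_rcons inE negb_or.
    case/andP=> /andP[_ n1] /andP[n2 u]; rewrite u n1 n2 => /(_ isT isT isT isT isT).
    by move/hasP=> [f fin fK]; move/allP: al => /(_ f fin); rewrite fK.
  exists (Xstab_of bnd S); split.
  + by exists S.
  + apply/eqP => /ffunP X.
    have cl : closed (dual_adj bnd) S.
      move=> a b /existsP[f /andP[fa fb]].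
      case: (eqVneq a b) => [->//|ab].
      have := X f; rewrite (xstab_pair two_vols S ab fa fb) ffunE.
      by case: (a \in S); case: (b \in S).
    by have := closed_connect cl (dual_conn nu nu'); rewrite nuS (negbTE nu'S).
  + apply/subsetP => f; rewrite inE; apply: contraTT => fK.
    have /eqP/cards2P[a [b [ab E]]] := two_vols f.
    have fa : f \in bnd a by move: (two_vols f) => _; have := in_set (fun v => f \in bnd v) a; rewrite -/(vols_of bnd f) E !inE eqxx => <-.
    have fb : f \in bnd b by have := in_set (fun v => f \in bnd v) b; rewrite -/(vols_of bnd f) E !inE eqxx orbT => <-.
    rewrite (xstab_pair two_vols S ab fa fb).
    have eab : e bnd Fc a b by apply/existsP; exists f; rewrite fa fb fK.
    have eba : e bnd Fc b a by apply/existsP; exists f; rewrite fa fb fK.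
    rewrite !inE.
    case Ca: (connect _ nu a); case Cb: (connect _ nu b) => //.
    * by rewrite (connect_trans Ca (connect1 eab)) in Cb.
    * by rewrite (connect_trans Cb (connect1 eba)) in Ca.
- case=> x [[S ->] xn sub].
  have [f xf] : exists f, Xstab_of bnd S f.
    case: (pickP (fun f => Xstab_of bnd S f)) => [f xf|A]; first by exists f.
    by case/eqP: xn; apply/ffunP => f; rewrite [RHS]ffunE A.
  have /eqP/cards2P[a [b [ab E]]] := two_vols f.
  have fa : f \in bnd a by move: (two_vols f) => _; have := in_set (fun v => f \in bnd v) a; rewrite -/(vols_of bnd f) E !inE eqxx => <-.
  have fb : f \in bnd b by have := in_set (fun v => f \in bnd v) b; rewrite -/(vols_of bnd f) E !inE eqxx orbT => <-.
  move: xf; rewrite (xstab_pair two_vols S ab fa fb).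
  have gen : forall u w, u \in S -> w \notin S -> cut_set bnd Fc.
    move=> u w uS wS; exists u, w => f0 s /andP[fp _] f0u lw _ _.
    exact: (cross_path two_vols sub uS wS f0u fp lw).
  by case aS: (a \in S); case bS: (b \in S) => //= _;
    [apply: (gen a b) | apply: (gen b a)]; rewrite ?aS ?bS.
Qed.
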